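(* Let $\mathcal{A}$ be a C*-algebra, let $E$ be a Hilbert $\mathcal{A}$-module satisfying property $[\mathbb{H}]$, let $C\in\mathcal{K}(E)$ and put $L:=I-C$. Then: (1) For every $y$ in the norm closure of $\mathrm{Ran}(L)$ there exist sequences $(x_n)$ in $E$ and $(u_n)$ in the closed submodule $\mathrm{Ker}(L)$ such that $Lx_n=x_n-Cx_n\to y$ and, for every $n$, $$\|x_n-u_n\|=\delta_n:=\inf\{\|x_n-u\|:\ u\in \mathrm{Ker}(L)\}.$$ (2) For such sequences, the sequence $\zeta_n:=x_n-u_n$ is bounded in $E$.
   Context: A (right) Hilbert $\mathcal{A}$-module $E$ is a right $\mathcal{A}$-module with an $\mathcal{A}$-valued inner product $\langle\cdot,\cdot\rangle$ (linear in the second variable, $\langle x,ya\rangle=\langle x,y\rangle a$, $\langle y,x\rangle=\langle x,y\rangle^*$, $\langle x,x\rangle\ge 0$ with equality iff $x=0$), complete in the norm $\|x\|=\|\langle x,x\rangle\|^{1/2}$. $\mathcal{L}(E)$ denotes the C*-algebra of adjointable operators on $E$; for $x,y\in E$, $\theta_{x,y}(z)=x\langle y,z\rangle$; $\mathcal{K}(E)$ (the compact operators) is the norm closure in $\mathcal{L}(E)$ of the linear span of $\{\theta_{x,y}:x,y\in E\}$. $E$ satisfies property $[\mathbb{H}]$ if for every bounded sequence $(\zeta_n)$ in $E$ there exist a subsequence $(\zeta_{n_k})$ and $\zeta\in E$ such that $\langle v,\zeta_{n_k}\rangle\to\langle v,\zeta\rangle$ for every $v\in E$. *)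

(* Defs.v *)
(* Scalars: C := R[i] (complex numbers over a
   realType R, from mathcomp-real-closed); every realType is a model of the
   reals, so R[i] is the field of complex numbers. *)
From HB Require Import structures.
From mathcomp Require Import all_boot all_order all_algebra.
From mathcomp Require Import all_classical all_reals all_analysis.
From mathcomp Require Import complex.
Set Implicit Arguments. Unset Strict Implicit. Unset Printing Implicit Defensive.
Import Order.TTheory GRing.Theory Num.Theory.
Import numFieldNormedType.Exports.
Local Open Scope classical_set_scope.
Local Open Scope ring_scope.

(* Real-valued norm (the norm of a normedModType over R[i] takes values in
   R[i], but is always a nonnegative real; we take its real part). *)
Definition rnorm (R : realType) (V : normedModType R[i]) (x : V) : R :=
  complex.Re `|x|.

Record Cstar_algebra (R : realType) (A : completeNormedModType R[i])
    (mul : A -> A -> A) (star : A -> A) : Prop := {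
  cs_mulA : forall a b c, mul a (mul b c) = mul (mul a b) c;
  cs_mulDl : forall a b c, mul (a + b) c = mul a c + mul b c;
  cs_mulDr : forall a b c, mul a (b + c) = mul a b + mul a c;
  cs_mulZl : forall (k : R[i]) a b, mul (k *: a) b = k *: mul a b;
  cs_mulZr : forall (k : R[i]) a b, mul a (k *: b) = k *: mul a b;
  cs_normM : forall a b, `|mul a b| <= `|a| * `|b|;
  cs_starD : forall a b, star (a + b) = star a + star b;
  cs_starZ : forall (k : R[i]) a, star (k *: a) = (k^*)%C *: star a;
  cs_starK : forall a, star (star a) = a;
  cs_starM : forall a b, star (mul a b) = mul (star b) (star a);
  cs_Cstar : forall a, `|mul (star a) a| = `|a| ^+ 2
}.

Definition Cstar_pos (R : realType) (A : completeNormedModType R[i])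
    (mul : A -> A -> A) (star : A -> A) (a : A) : Prop :=
  exists b, a = mul (star b) b.

Record Hilbert_module (R : realType) (A : completeNormedModType R[i])
    (mul : A -> A -> A) (star : A -> A)
    (E : completeNormedModType R[i]) (act : E -> A -> E) (ip : E -> E -> A)
    : Prop := {
  hm_actDl : forall x y a, act (x + y) a = act x a + act y a;
  hm_actDr : forall x a b, act x (a + b) = act x a + act x b;
  hm_actM : forall x a b, act x (mul a b) = act (act x a) b;
  hm_actZl : forall (k : R[i]) x a, act (k *: x) a = k *: act x a;
  hm_actZr : forall (k : R[i]) x a, act x (k *: a) = k *: act x a;
  hm_ipD : forall x y z, ip x (y + z) = ip x y + ip x z;
  hm_ipZ : forall (k : R[i]) x y, ip x (k *: y) = k *: ip x y;
  hm_ipact : forall x y a, ip x (act y a) = mul (ip x y) a;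
  hm_ipC : forall x y, ip y x = star (ip x y);
  hm_ippos : forall x, Cstar_pos mul star (ip x x);
  hm_ipdef : forall x, ip x x = 0 -> x = 0;
  hm_norm : forall x, `|x| ^+ 2 = `|ip x x|
}.

Definition property_H (R : realType) (A : completeNormedModType R[i])
    (E : completeNormedModType R[i]) (ip : E -> E -> A) : Prop :=
  forall zeta : nat -> E, (exists M : R, forall n, rnorm (zeta n) <= M) ->
  exists (phi : nat -> nat) (z : E),
    {homo phi : m n / (m < n)%N} /\
    forall v : E, (fun k => ip v (zeta (phi k))) @ \oo --> ip v z.

Definition adjointable (R : realType) (A : completeNormedModType R[i])
    (E : completeNormedModType R[i]) (ip : E -> E -> A) (T : E -> E) : Prop :=
  exists T' : E -> E, forall x y, ip (T x) y = ip x (T' y).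

Definition theta (R : realType) (A : completeNormedModType R[i])
    (E : completeNormedModType R[i]) (act : E -> A -> E) (ip : E -> E -> A)
    (x y : E) : E -> E := fun z => act x (ip y z).

Definition finite_rank_op (R : realType) (A : completeNormedModType R[i])
    (E : completeNormedModType R[i]) (act : E -> A -> E) (ip : E -> E -> A)
    (s : seq (E * E)) : E -> E :=
  fun z => \sum_(p <- s) theta act ip p.1 p.2 z.

(* K(E): the closure in L(E) (for the operator norm) of the linear span of
   the theta_{x,y}.  ||T - K||_op <= eps is written out as
   forall z, ||T z - K z|| <= eps ||z||. *)
Definition compact_op (R : realType) (A : completeNormedModType R[i])
    (E : completeNormedModType R[i]) (act : E -> A -> E) (ip : E -> E -> A)
    (T : E -> E) : Prop :=
  adjointable ip T /\
  forall eps : R, 0 < eps -> exists s : seq (E * E),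
    forall z, rnorm (T z - finite_rank_op act ip s z) <= eps * rnorm z.

(* Main.v *)
Require Import Defs.
From HB Require Import structures.
From mathcomp Require Import all_boot all_order all_algebra.
From mathcomp Require Import all_classical all_reals all_analysis.
From mathcomp Require Import complex ring lra.
Set Implicit Arguments. Unset Strict Implicit. Unset Printing Implicit Defensive.
Import Order.TTheory GRing.Theory Num.Theory.
Import numFieldNormedType.Exports.
Local Open Scope classical_set_scope.
Local Open Scope ring_scope.
Section RN.
Variable R : realType.
Variable V : normedModType R[i].

Lemma realC_ge0 (z : R[i]) : 0 <= z -> z = (complex.Re z)%:C%C.
Proof. case: z => a b; rewrite lecE /= => /andP[/eqP h _]. by rewrite h. Qed.

Lemma rnormE (x : V) : `|x| = (rnorm x)%:C%C.
Proof. by rewrite /rnorm; apply: realC_ge0. Qed.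

Lemma rnorm_ge0 (x : V) : 0 <= rnorm x.
Proof. by rewrite -ler0c -rnormE. Qed.

Lemma rnormD (x y : V) : rnorm (x + y) <= rnorm x + rnorm y.
Proof. by rewrite -lecR raddfD /= -!rnormE ler_normD. Qed.

Lemma rnormN (x : V) : rnorm (- x) = rnorm x.
Proof. by rewrite /rnorm normrN. Qed.

Lemma rnormB (x y : V) : rnorm (x - y) = rnorm (y - x).
Proof. by rewrite -rnormN opprB. Qed.

Lemma rnorm0 : rnorm (0 : V) = 0.
Proof. by rewrite /rnorm normr0. Qed.

Lemma rnorm_eq0 (x : V) : rnorm x = 0 -> x = 0.
Proof. by move=> h; apply/eqP; rewrite -normr_eq0 rnormE h. Qed.

Lemma rnormZ (k : R[i]) (x : V) : rnorm (k *: x) = complex.Re `|k| * rnorm x.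
Proof.
apply: complexI; rewrite rmorphM /= -rnormE normrZ.
congr (_ * _); apply: realC_ge0; exact: normr_ge0.
Qed.

Lemma Re_normR (t : R) : complex.Re `|t%:C%C| = `|t|.
Proof. by rewrite normc_def /= expr0n addr0 sqrtr_sqr. Qed.

Lemma rnormZR (t : R) (x : V) : rnorm (t%:C%C *: x) = `|t| * rnorm x.
Proof. by rewrite rnormZ Re_normR. Qed.

Definition cv (u : nat -> V) (l : V) :=
  forall e : R, 0 < e -> exists N, forall n, (N <= n)%N -> rnorm (l - u n) < e.

Lemma cvgE (u : nat -> V) l : u @ \oo --> l <-> cv u l.
Proof.
split.
  move/cvgrPdist_lt => H e e0.
  have e0' : 0 < e%:C%C by rewrite ltcR.
  have [N _ HN] := H _ e0'.
  by exists N => n Nn; have := HN n Nn; rewrite rnormE ltcR.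
move=> H; apply/cvgrPdist_lt => eps eps0.
rewrite (realC_ge0 (ltW eps0)).
have e0 : 0 < complex.Re eps by rewrite -ltcR -realC_ge0 // ltW.
have [N HN] := H _ e0.
by exists N => // n /= Nn; rewrite rnormE ltcR; apply: HN.
Qed.
End RN.
Section Alg.
Variable R : realType.
Variables (A : completeNormedModType R[i]) (mul : A -> A -> A) (star : A -> A).
Variables (E : completeNormedModType R[i]) (act : E -> A -> E) (ip : E -> E -> A).
Hypothesis CA : Cstar_algebra mul star.
Hypothesis HM : Hilbert_module mul star act ip.

Lemma sqr_le (a b : R) : 0 <= a -> 0 <= b -> a ^+ 2 <= b ^+ 2 -> a <= b.
Proof. by move=> a0 b0; rewrite ler_sqr ?nnegrE. Qed.

Lemma dbl0 (G : zmodType) (x : G) : x = x + x -> x = 0.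
Proof. by move=> h; apply: (addrI x); rewrite addr0 -h. Qed.

Lemma mul0a a : mul 0 a = 0.
Proof. by apply: dbl0; rewrite -(cs_mulDl CA) addr0. Qed.
Lemma mula0 a : mul a 0 = 0.
Proof. by apply: dbl0; rewrite -(cs_mulDr CA) addr0. Qed.
Lemma star0 : star 0 = 0.
Proof. by apply: dbl0; rewrite -(cs_starD CA) addr0. Qed.
Lemma act0 x : act x 0 = 0.
Proof. by apply: dbl0; rewrite -(hm_actDr HM) addr0. Qed.
Lemma act0l a : act 0 a = 0.
Proof. by apply: dbl0; rewrite -(hm_actDl HM) addr0. Qed.
Lemma ip0 x : ip x 0 = 0.
Proof. by apply: dbl0; rewrite -(hm_ipD HM) addr0. Qed.
Lemma ipDl x y z : ip (x + y) z = ip x z + ip y z.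
Proof. by rewrite (hm_ipC HM) (hm_ipD HM) (cs_starD CA) -!(hm_ipC HM). Qed.
Lemma ip0l z : ip 0 z = 0.
Proof. by apply: dbl0; rewrite -ipDl addr0. Qed.
Lemma ipZl k x z : ip (k *: x) z = (k^*)%C *: ip x z.
Proof. by rewrite (hm_ipC HM) (hm_ipZ HM) (cs_starZ CA) -!(hm_ipC HM). Qed.

Lemma addN0 (G H : zmodType) (f : G -> H) (fD : forall a b, f (a + b) = f a + f b) a :
  f (- a) = - f a.
Proof.
have f0 : f 0 = 0 by apply: dbl0; rewrite -fD addr0.
by apply/eqP; rewrite -subr_eq0 opprK -fD addNr f0.
Qed.

Lemma ipN x y : ip x (- y) = - ip x y.
Proof. by apply: (@addN0 _ _ (ip x)) => a b; apply: (hm_ipD HM). Qed.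
Lemma ipNl x y : ip (- x) y = - ip x y.
Proof. by apply: (@addN0 _ _ (fun x => ip x y)) => a b; apply: ipDl. Qed.
Lemma ipB x y z : ip x (y - z) = ip x y - ip x z.
Proof. by rewrite (hm_ipD HM) ipN. Qed.
Lemma ipBl x y z : ip (x - y) z = ip x z - ip y z.
Proof. by rewrite ipDl ipNl. Qed.
Lemma actN x a : act x (- a) = - act x a.
Proof. by apply: (@addN0 _ _ (act x)) => ??; apply: (hm_actDr HM). Qed.
Lemma actB x a b : act x (a - b) = act x a - act x b.
Proof. by rewrite (hm_actDr HM) actN. Qed.

Lemma rnormM a b : rnorm (mul a b) <= rnorm a * rnorm b.
Proof. by rewrite -lecR rmorphM /= -!rnormE; apply: (cs_normM CA). Qed.

Lemma rnormCs a : rnorm (mul (star a) a) = rnorm a ^+ 2.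
Proof. by apply: complexI; rewrite rmorphXn /= -!rnormE; apply: (cs_Cstar CA). Qed.

Lemma rnorm_star_le a : rnorm a <= rnorm (star a).
Proof.
have [a0|a0] := eqVneq (rnorm a) 0; first by rewrite a0 rnorm_ge0.
have ap : 0 < rnorm a by rewrite lt0r a0 rnorm_ge0.
rewrite -(ler_pM2r ap) -expr2 -rnormCs; exact: rnormM.
Qed.

Lemma rnorm_star a : rnorm (star a) = rnorm a.
Proof.
by apply/le_anti; rewrite rnorm_star_le -{2}(cs_starK CA a) rnorm_star_le.
Qed.

Lemma rnorm_ipxx x : rnorm (ip x x) = rnorm x ^+ 2.
Proof. by apply: complexI; rewrite rmorphXn /= -!rnormE; rewrite (hm_norm HM). Qed.

Lemma rnorm_act x c : rnorm (act x c) <= rnorm x * rnorm c.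
Proof.
apply: sqr_le; rewrite ?mulr_ge0 ?rnorm_ge0 //.
rewrite -rnorm_ipxx (hm_ipact HM) (hm_ipC HM) (hm_ipact HM) (cs_starM CA).
apply: (le_trans (rnormM _ _)); apply: (le_trans (ler_wpM2r (rnorm_ge0 _) (rnormM _ _))).
rewrite !rnorm_star rnorm_ipxx le_eqVlt; apply/orP; left; apply/eqP; ring.
Qed.

Lemma zid1 (G : zmodType) (a b c d : G) :
  a + b + (c + d) - (a - b - (c - d)) = (b + c) + (b + c).
Proof.
rewrite !opprB ?opprD ?opprK !addrA.
by rewrite (ACl (((1*8)*(4*6))*((2*3)*(7*5)))%AC) /= !subrr !add0r addrA.
Qed.
Lemma zid2 (G : zmodType) (b c : G) :
  b + c - (- b + c) = b + b.
Proof. by rewrite opprD opprK addrA addrAC addrK. Qed.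

Lemma rnorm2 (V : normedModType R[i]) (a : V) : rnorm (a + a) = 2 * rnorm a.
Proof.
have -> : a + a = (2%:R : R)%:C%C *: a by rewrite rmorph_nat scaler_nat mulr2n.
by rewrite rnormZR normr_nat.
Qed.

Lemma rnormDB (V : normedModType R[i]) (x y : V) : rnorm (x - y) <= rnorm x + rnorm y.
Proof. by rewrite -(rnormN y) rnormD. Qed.

Lemma S_bound x y : rnorm (ip x y + ip y x) <= (rnorm x + rnorm y) ^+ 2.
Proof.
have id : ip (x + y) (x + y) - ip (x - y) (x - y) = (ip x y + ip y x) + (ip x y + ip y x).
  by rewrite ipDl ipBl !(hm_ipD HM) !ipN zid1.
rewrite -(ler_pM2l (ltr0Sn R 1)) -rnorm2 -id.
apply: (le_trans (rnormDB _ _)); rewrite !rnorm_ipxx.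
have h1 : rnorm (x + y) ^+ 2 <= (rnorm x + rnorm y) ^+ 2.
  by rewrite ler_sqr ?nnegrE ?addr_ge0 ?rnorm_ge0 ?rnormD.
have h2 : rnorm (x - y) ^+ 2 <= (rnorm x + rnorm y) ^+ 2.
  by rewrite ler_sqr ?nnegrE ?addr_ge0 ?rnorm_ge0 ?rnormDB.
by rewrite mulr2n mulrDl mul1r lerD.
Qed.

Lemma conj_i : ('i%C : R[i])^*%C = - 'i%C.
Proof. by apply/eqP; rewrite eq_complex /= oppr0 !eqxx. Qed.

Lemma i_i : ('i%C : R[i]) * 'i%C = -1.
Proof. by rewrite -expr2 sqr_i. Qed.

Lemma Re_norm_i : complex.Re `|('i%C : R[i])| = 1.
Proof. by rewrite normc_def /= expr0n expr1n add0r sqrtr1. Qed.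

Lemma ip_bound x y : rnorm (ip x y) <= (rnorm x + rnorm y) ^+ 2.
Proof.
have id : ip x y + ip x y = (ip x y + ip y x) - 'i%C *: (ip x ('i%C *: y) + ip ('i%C *: y) x).
  rewrite (hm_ipZ HM) ipZl conj_i scalerDr !scalerA i_i mulrN i_i opprK.
  by rewrite scaleN1r scale1r zid2.
rewrite -(ler_pM2l (ltr0Sn R 1)) -rnorm2 id.
apply: (le_trans (rnormDB _ _)); rewrite rnormZ Re_norm_i mul1r.
have := S_bound x ('i%C *: y); rewrite rnormZ Re_norm_i mul1r => h.
by rewrite mulr2n mulrDl mul1r lerD // S_bound.
Qed.

Lemma ip_lin v z : rnorm (ip v z) <= (rnorm v + 1) ^+ 2 * rnorm z.
Proof.
have [z0|z0] := eqVneq (rnorm z) 0.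
  by rewrite (rnorm_eq0 z0) ip0 !rnorm0 mulr0.
have tp : 0 < rnorm z by rewrite lt0r z0 rnorm_ge0.
set t := rnorm z in tp *.
have ez : z = t%:C%C *: ((t^-1)%:C%C *: z).
  by rewrite scalerA -rmorphM mulfV ?rmorph1 ?scale1r // gt_eqF.
rewrite {1}ez (hm_ipZ HM) rnormZR (ger0_norm (ltW tp)) [X in _ <= X]mulrC ler_pM2l //.
apply: (le_trans (ip_bound _ _)).
suff -> : rnorm ((t^-1)%:C%C *: z) = 1 by [].
by rewrite rnormZR ger0_norm ?invr_ge0 ?ltW // mulVf // gt_eqF.
Qed.

Lemma small_pos (r : R) : 0 <= r -> (forall e, 0 < e -> r < e) -> r = 0.
Proof.
move=> r0 h; apply/eqP; rewrite eq_le r0 andbT; rewrite leNgt; apply/negP => rp.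
by have := h _ rp; rewrite ltxx.
Qed.

Lemma archi_inv (e : R) : 0 < e -> exists N, forall n, (N <= n)%N -> (n.+1%:R : R)^-1 < e.
Proof.
move=> e0; exists (Num.trunc (e^-1)) => n Nn.
by rewrite invf_plt ?posrE ?ltr0Sn // -truncn_le_nat.
Qed.

Section CV.
Variable V W : normedModType R[i].

Lemma cv_unique (u : nat -> V) l1 l2 : cv u l1 -> cv u l2 -> l1 = l2.
Proof.
move=> h1 h2; apply/eqP; rewrite -subr_eq0; apply/eqP; apply: rnorm_eq0; apply: small_pos; first exact: rnorm_ge0.
move=> e e0; have e2 : 0 < e / 2 by rewrite divr_gt0.
have [N1 H1] := h1 _ e2; have [N2 H2] := h2 _ e2.
have -> : l1 - l2 = (l1 - u (maxn N1 N2)) + (u (maxn N1 N2) - l2).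
  by rewrite addrA subrK.
apply: (le_lt_trans (rnormD _ _)); rewrite (rnormB (u _)) [e](splitr e).
by apply: ltrD; [apply: H1|apply: H2]; rewrite ?leq_maxl ?leq_maxr.
Qed.

Lemma cv_lip (f : V -> W) (c : R) (u : nat -> V) l : 0 < c ->
  (forall a b, rnorm (f a - f b) <= c * rnorm (a - b)) -> cv u l -> cv (fun n => f (u n)) (f l).
Proof.
move=> c0 hf hu e e0; have [N HN] := hu (e / c) (divr_gt0 e0 c0).
exists N => n Nn; apply: (le_lt_trans (hf _ _)).
by rewrite -ltr_pdivlMl // mulrC; apply: HN.
Qed.

Lemma cv_add (u v : nat -> V) l m : cv u l -> cv v m -> cv (fun n => u n + v n) (l + m).
Proof.
move=> hu hv e e0; have e2 : 0 < e / 2 by rewrite divr_gt0.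
have [N1 H1] := hu _ e2; have [N2 H2] := hv _ e2.
exists (maxn N1 N2) => n Nn.
have -> : l + m - (u n + v n) = (l - u n) + (m - v n) by rewrite opprD addrACA.
apply: (le_lt_trans (rnormD _ _)); rewrite [e](splitr e).
by apply: ltrD; [apply: H1|apply: H2]; apply: leq_trans Nn; rewrite ?leq_maxl ?leq_maxr.
Qed.

Lemma cv_cst (l : V) : cv (fun _ => l) l.
Proof. by move=> e e0; exists 0%N => n _; rewrite subrr rnorm0. Qed.

Lemma cv_sum (I : Type) (s : seq I) (F : I -> nat -> V) (L : I -> V) :
  (forall i, cv (F i) (L i)) -> cv (fun n => \sum_(i <- s) F i n) (\sum_(i <- s) L i).
Proof.
move=> h; elim: s => [|a s IH].
  under eq_fun do rewrite big_nil. by rewrite big_nil; apply: cv_cst.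
under eq_fun do rewrite big_cons. by rewrite big_cons; apply: cv_add.
Qed.
End CV.

Lemma cv_ip v (u : nat -> E) l : cv u l -> cv (fun n => ip v (u n)) (ip v l).
Proof.
apply: (cv_lip (c := (rnorm v + 1) ^+ 2)).
  by rewrite exprn_gt0 // ltr_pwDr ?rnorm_ge0.
by move=> a b; rewrite -ipB ip_lin.
Qed.

Lemma cv_act x (u : nat -> A) l : cv u l -> cv (fun n => act x (u n)) (act x l).
Proof.
apply: (cv_lip (c := rnorm x + 1)); first by rewrite ltr_pwDr ?rnorm_ge0.
move=> a b; rewrite -actB; apply: (le_trans (rnorm_act _ _)).
by rewrite ler_wpM2r ?rnorm_ge0 // lerDl.
Qed.

Lemma adj_add T : adjointable ip T -> forall x y, T (x + y) = T x + T y.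
Proof.
case=> T' hT x y; apply/eqP; rewrite -subr_eq0; apply/eqP; apply: (hm_ipdef HM).
set d := _ - _.
by rewrite {1}/d ipBl ipDl !hT ipDl subrr.
Qed.

Lemma adj_scale T : adjointable ip T -> forall k x, T (k *: x) = k *: T x.
Proof.
case=> T' hT k x; apply/eqP; rewrite -subr_eq0; apply/eqP; apply: (hm_ipdef HM).
set d := _ - _.
by rewrite {1}/d ipBl ipZl !hT ipZl subrr.
Qed.

Lemma compact_cv C (HC : compact_op act ip C) (w : nat -> E) (w0 : E) (M : R) :
  (forall k, rnorm (w k) <= M) ->
  (forall v, cv (fun k => ip v (w k)) (ip v w0)) ->
  cv (fun k => C (w k)) (C w0).
Proof.
move=> hM hw e e0.
have M0 : 0 <= M by apply: le_trans (hM 0%N); exact: rnorm_ge0.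
set K := M + rnorm w0 + 1.
have K0 : 0 < K.
  by apply: (lt_le_trans ltr01); apply: ler_wpDl; rewrite ?addr_ge0 ?rnorm_ge0.
have e3 : 0 < e / 3 by rewrite divr_gt0.
set eps := e / 3 / K.
have eps0 : 0 < eps by rewrite divr_gt0.
have [s hs] := (proj2 HC) eps eps0.
set F := finite_rank_op act ip s.
have hF : cv (fun k => F (w k)) (F w0).
  rewrite /F /finite_rank_op.
  apply: (@cv_sum E _ s (fun p n => theta act ip p.1 p.2 (w n))) => p.
  by rewrite /theta; apply: cv_act; apply: hw.
have [N HN] := hF _ e3.
exists N => k Nk.
have -> : C w0 - C (w k) = (C w0 - F w0) + (F w0 - F (w k)) + (F (w k) - C (w k)).
  by rewrite !addrA !subrK.
apply: (le_lt_trans (rnormD _ _)); apply: (le_lt_trans (lerD (rnormD _ _) (lexx _))).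
have h1 := hs w0.
have h2 := HN k Nk.
have h3 : rnorm (F (w k) - C (w k)) <= eps * M.
  by rewrite rnormB; apply: (le_trans (hs _)); rewrite ler_pM2l.
have hK : eps * rnorm w0 + eps * M <= e / 3.
  rewrite -mulrDr -[e / 3](@divfK _ K) ?gt_eqF // ler_pM2l //.
  by rewrite /K [M + _]addrC lerDl ler01.
lra.
Qed.

Lemma zid3 (G : zmodType) (a b c d : G) : a - b - (c - d) = (a - c) - (b - d).
Proof. by rewrite !opprB !addrA [LHS](ACl (1*4*3*2)%AC). Qed.
Lemma zid4 (G : zmodType) (a b c d : G) : a + b - (c + d) = (a - c) + (b - d).
Proof. by rewrite opprD !addrA [LHS](ACl (1*3*2*4)%AC). Qed.

Lemma incr_ge (phi : nat -> nat) : {homo phi : m n / (m < n)%N} -> forall k, (k <= phi k)%N.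
Proof.
move=> h; elim=> [|k IH] //; apply: leq_ltn_trans IH _; exact: h.
Qed.

Lemma H_sub (HH : property_H ip) (z : nat -> E) M : (forall n, rnorm (z n) <= M) ->
  exists (phi : nat -> nat) (w : E), (forall k, (k <= phi k)%N) /\
    forall v, cv (fun k => ip v (z (phi k))) (ip v w).
Proof.
move=> hM; have [phi [w [hphi hw]]] := HH z (ex_intro _ M hM).
exists phi, w; split; first exact: incr_ge.
by move=> v; apply/cvgE; apply: hw.
Qed.

Lemma weak_norm (u : nat -> E) z w : cv u z -> (forall v, cv (fun k => ip v (u k)) (ip v w)) ->
  w = z.
Proof.
move=> hz hw.
have e : forall v, ip v w = ip v z.
  by move=> v; apply: (cv_unique (hw v)); apply: cv_ip.
apply/eqP; rewrite -subr_eq0; apply/eqP; apply: (hm_ipdef HM).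
by rewrite ipB e subrr.
Qed.

Lemma cv_ext (V : normedModType R[i]) (f g : nat -> V) l : (forall n, f n = g n) -> cv f l -> cv g l.
Proof. by move=> h; have -> : g = f by apply/funext => n; rewrite h. Qed.

Section Main.
Variable C : E -> E.
Hypothesis HC : compact_op act ip C.
Hypothesis HH : property_H ip.

Lemma CD x y : C (x + y) = C x + C y. Proof. exact (adj_add (proj1 HC) x y). Qed.
Lemma CZ k x : C (k *: x) = k *: C x. Proof. exact (adj_scale (proj1 HC) k x). Qed.
Lemma CN x : C (- x) = - C x. Proof. by apply: (@addN0 _ _ C); apply: CD. Qed.
Lemma CB x y : C (x - y) = C x - C y. Proof. by rewrite CD CN. Qed.
Lemma C0 : C 0 = 0. Proof. by apply: dbl0; rewrite -CD addr0. Qed.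

Definition LL x := x - C x.
Lemma LB x y : LL (x - y) = LL x - LL y.
Proof. by rewrite /LL CB zid3. Qed.
Lemma LD x y : LL (x + y) = LL x + LL y.
Proof. by rewrite /LL CD zid4. Qed.
Lemma LZ k x : LL (k *: x) = k *: LL x.
Proof. by rewrite /LL CZ scalerBr. Qed.
Lemma L0 : LL 0 = 0. Proof. by rewrite /LL C0 subrr. Qed.
Lemma ker_C u : LL u = 0 -> C u = u.
Proof. by move/eqP; rewrite subr_eq0 => /eqP <-. Qed.

Lemma attain x : exists u, LL u = 0 /\
  rnorm (x - u) = inf [set rnorm (x - v) | v in [set u | LL u = 0]].
Proof.
set S := [set rnorm (x - v) | v in [set u | LL u = 0]].
have S0 : S !=set0 by exists (rnorm (x - 0)); exists 0 => //; exact: L0.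
have lbS : has_lbound S by exists 0 => r [v _ <-]; exact: rnorm_ge0.
set d := inf S.
have hk : forall k : nat, exists v, LL v = 0 /\ rnorm (x - v) < d + (k.+1%:R)^-1.
  move=> k; have ek : 0 < (k.+1%:R : R)^-1 by rewrite invr_gt0 ltr0Sn.
  have [r [v hv <-] hr] := @inf_adherent R S _ ek (conj S0 lbS).
  by exists v.
have [u hu] := choice hk.
have hb : forall k, rnorm (u k) <= rnorm x + (d + 1).
  move=> k; have -> : u k = x - (x - u k) by rewrite opprB addrC subrK.
  apply: (le_trans (rnormDB _ _)); rewrite lerD2l; apply: ltW.
  apply: (lt_le_trans (hu k).2); rewrite lerD2l invf_le1 ?ltr0Sn //.
  by rewrite ler1n.
have [phi [w [hphi hw]]] := H_sub HH hb.
have hc := compact_cv HC (fun k => hb (phi k)) hw.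
have hc' : cv (fun k => u (phi k)) (C w).
  by apply: (cv_ext _ hc) => n; rewrite ker_C // (hu _).1.
have ew := weak_norm hc' hw.
have Kw : LL w = 0 by rewrite /LL -ew subrr.
exists w; split => //.
apply/le_anti; rewrite ge_inf //; last by exists w.
rewrite andbT; apply/ler_addgt0Pr => e e0.
have e2 : 0 < e / 2 by rewrite divr_gt0.
rewrite -ew in hc'.
have [N1 H1] := hc' _ e2; have [N2 H2] := archi_inv e2.
set n := maxn N1 N2.
have -> : x - w = (x - u (phi n)) + (u (phi n) - w) by rewrite addrA subrK.
apply: (le_trans (rnormD _ _)); rewrite (rnormB (u (phi n)) w).
have h1 := H1 n (leq_maxl _ _).
have h2 := H2 (phi n) (leq_trans (leq_maxr _ _) (hphi n)).
have h3 := (hu (phi n)).2.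
rewrite [e](splitr e) addrA; apply: ltW; apply: ltrD => //.
by apply: (lt_trans h3); rewrite ltrD2l.
Qed.

Lemma approx y : closure (range LL) y -> exists x : nat -> E, cv (fun n => LL (x n)) y.
Proof.
move=> hy.
have hk : forall k : nat, exists x, rnorm (y - LL x) < (k.+1%:R)^-1.
  move=> k; have ep : 0 < ((k.+1%:R : R)^-1)%:C%C by rewrite ltcR invr_gt0 ltr0Sn.
  have [z [[x _ <-] hb]] := hy _ (nbhsx_ballx y _ ep).
  by exists x; move: hb; rewrite -ball_normE /ball_ /= rnormE ltcR.
have [x hx] := choice hk; exists x => e e0.
have [N HN] := archi_inv e0; exists N => n Nn; exact: lt_trans (hx n) (HN n Nn).
Qed.

Lemma fin_bound (f : nat -> R) N : exists B, forall n, (n < N)%N -> f n <= B.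
Proof.
elim: N => [|N [B hB]]; first by exists 0.
exists (Num.max B (f N)) => n; rewrite ltnS leq_eqVlt => /orP[/eqP ->|hn].
  by rewrite le_max lexx orbT.
by rewrite le_max hB.
Qed.

Lemma bounded (x u : nat -> E) y :
  (forall n, LL (u n) = 0) -> cv (fun n => LL (x n)) y ->
  (forall n, rnorm (x n - u n) = inf [set rnorm (x n - v) | v in [set u | LL u = 0]]) ->
  exists M, forall n, rnorm (x n - u n) <= M.
Proof.
move=> hu hx hinf.
have [B [B0 hB]] : exists B, 0 <= B /\ forall n, rnorm (LL (x n)) <= B.
  have [N HN] := hx 1 ltr01.
  have [B0 hB0] := fin_bound (fun n => rnorm (LL (x n))) N.
  exists (Num.max B0 (rnorm y + 1)); split.
    by rewrite le_max addr_ge0 ?rnorm_ge0 ?orbT.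
  move=> n; case: (ltnP n N) => hn.
    by rewrite le_max hB0.
  rewrite le_max; apply/orP; right.
  have -> : LL (x n) = y - (y - LL (x n)) by rewrite opprB addrC subrK.
  by apply: (le_trans (rnormDB _ _)); rewrite lerD2l ltW // HN.
case: (pselect (exists M, forall n, rnorm (x n - u n) <= M)) => // hno; exfalso.
have hun : forall k : nat, exists n, k.+1%:R < rnorm (x n - u n).
  move=> k; case: (pselect (exists n, k.+1%:R < rnorm (x n - u n))) => // hk.
  exfalso; apply: hno; exists k.+1%:R => n.
  by rewrite leNgt; apply/negP => h; apply: hk; exists n.
have [nk hnk] := choice hun.
pose t k := rnorm (x (nk k) - u (nk k)).
have tp : forall k, 0 < t k by move=> k; apply: lt_trans (hnk k).
pose w k := ((t k)^-1)%:C%C *: (x (nk k) - u (nk k)).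
have hw1 : forall k, rnorm (w k) <= 1.
  move=> k; have tk := tp k.
  rewrite rnormZR ger0_norm; last by rewrite invr_ge0 ltW.
  by rewrite mulVf // gt_eqF.
have tiv : forall k, 0 <= (t k)^-1 by move=> k; rewrite invr_ge0 ltW.
have hwL : forall k, rnorm (LL (w k)) <= (k.+1%:R)^-1 * B.
  move=> k; rewrite /w LZ LB hu subr0 rnormZR (ger0_norm (tiv k)).
  apply: (le_trans (ler_wpM2l (tiv k) (hB _))).
  apply: ler_wpM2r => //; rewrite lef_pV2 ?posrE ?ltr0Sn //; exact: ltW.
have hdist : forall k v, LL v = 0 -> 1 <= rnorm (w k - v).
  move=> k v hv.
  have -> : w k - v = ((t k)^-1)%:C%C *: (x (nk k) - (u (nk k) + (t k)%:C%C *: v)).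
    rewrite scalerBr scalerDr scalerA -rmorphM mulVf ?gt_eqF // rmorph1 scale1r.
    by rewrite /w scalerBr opprD addrA.
  rewrite rnormZR (ger0_norm (tiv k)) -(mulVf (lt0r_neq0 (tp k))).
  rewrite ler_pM2l ?invr_gt0 // {1}/t hinf; apply: ge_inf.
    by exists 0 => r [? _ <-]; exact: rnorm_ge0.
  by exists (u (nk k) + (t k)%:C%C *: v) => //; rewrite /= LD LZ hu hv scaler0 addr0.
have [phi [w0 [hphi hw]]] := H_sub HH hw1.
have hc := compact_cv HC (fun k => hw1 (phi k)) hw.
have hL : cv (fun k => LL (w (phi k))) 0.
  move=> e e0; have eB : 0 < e / (B + 1) by rewrite divr_gt0 // ltr_wpDl.
  have [N HN] := archi_inv eB; exists N => k Nk.
  rewrite sub0r rnormN; apply: (le_lt_trans (hwL _)).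
  apply: (le_lt_trans (y := (phi k).+1%:R^-1 * (B + 1))).
    by rewrite ler_wpM2l ?invr_ge0 ?ler0n // lerDl ler01.
  rewrite -ltr_pdivlMr ?ltr_wpDl //; apply: HN; exact: leq_trans Nk (hphi k).
have hs := cv_add hL hc; rewrite add0r in hs.
have hs' : cv (fun k => w (phi k)) (C w0).
  by apply: (cv_ext _ hs) => k; rewrite /LL subrK.
have ew := weak_norm hs' hw.
have Kw : LL w0 = 0 by rewrite /LL -ew subrr.
rewrite -ew in hs'.
have [N HN] := hs' 1 ltr01.
have := HN N (leqnn N); rewrite rnormB => h.
by move: (hdist (phi N) w0 Kw); rewrite leNgt h.
Qed.
End Main.
End Alg.

Theorem lemma2p4 (R : realType) (A : completeNormedModType R[i])
    (mul : A -> A -> A) (star : A -> A)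
    (E : completeNormedModType R[i]) (act : E -> A -> E) (ip : E -> E -> A)
    (C : E -> E) :
  Cstar_algebra mul star ->
  Hilbert_module mul star act ip ->
  property_H ip ->
  compact_op act ip C ->
  let L := fun x : E => x - C x in
  let KerL := [set u : E | L u = 0] in
  (* (1) *)
  (forall y : E, closure (range L) y ->
    exists (x u : nat -> E),
      (forall n, KerL (u n)) /\
      (fun n => L (x n)) @ \oo --> y /\
      (forall n, rnorm (x n - u n) = inf [set rnorm (x n - v) | v in KerL]))
  /\
  (* (2) *)
  (forall (y : E) (x u : nat -> E),
      closure (range L) y ->
      (forall n, KerL (u n)) ->
      (fun n => L (x n)) @ \oo --> y ->
      (forall n, rnorm (x n - u n) = inf [set rnorm (x n - v) | v in KerL]) ->
      exists M : R, forall n, rnorm (x n - u n) <= M).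
Proof.
move=> CA HM HH HC L KerL; split.
  move=> y hy.
  have [x hx] := @approx _ _ C y hy.
  have [u hu] := choice (fun n => attain CA HM HC HH (x n)).
  exists x, u; split; [|split].
  - by move=> n; exact: (hu n).1.
  - by apply/cvgE; exact: hx.
  - by move=> n; exact: (hu n).2.
move=> y x u hy hu hx hinf.
exact: (bounded CA HM HC HH hu (proj1 (cvgE _ _) hx) hinf).
Qed.
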